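(* Let $H$ be a complex Hilbert space, $V=\mathcal{L}(H)_{sa}$, $r$ a positive integer and $\mathfrak{M}(r)$ the manifold of projections in $V$ of rank $r$. Then $\mathfrak{M}(r)$ is homogeneous (the action is transitive) under each of the groups $\operatorname{Aut}^\circ(V)$ and $\mathfrak{S}(r)$.
   Context: $V$ is the set of self-adjoint bounded operators on $H$ with Jordan product $x\circ y=\frac12(xy+yx)$. A projection is $a=a^2=a^*$. $\operatorname{Aut}^\circ(V)$ is the connected component of the identity in the group of Jordan automorphisms of $V$ (equivalently of Jordan $*$-automorphisms of $\mathcal{L}(H)$, restricted to $V$), with the topology of uniform convergence on the unit ball. For a projection $p$, the Peirce reflection is $\sigma_p=\mathrm{Id}-2P_{1/2}(p)$, where $P_{1/2}(p)x=px(\mathbf 1-p)+(\mathbf 1-p)xp$; $\mathfrak{S}(r)$ is the group generated by the $\sigma_p$, $p\in\mathfrak{M}(r)$. *)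

(* Defs.v *)
From HB Require Import structures.
From mathcomp Require Import all_boot all_order all_algebra.
From mathcomp Require Import reals complex.
Set Implicit Arguments. Unset Strict Implicit. Unset Printing Implicit Defensive.
Import Order.TTheory GRing.Theory Num.Theory.
Local Open Scope ring_scope.

Section Defs.
Variables (R : realType) (H : lmodType R[i]) (ip : H -> H -> R[i]).

Definition hnorm (x : H) : R := Num.sqrt (complex.Re (ip x x)).

Definition is_complex_hilbert : Prop :=
  [/\ (forall (a : R[i]) (x y z : H), ip (a *: x + y) z = a * ip x z + ip y z),
      (forall x y : H, ip y x = (ip x y)^*),
      (forall x : H, 0 <= ip x x),
      (forall x : H, ip x x = 0 -> x = 0) &
      (forall u : nat -> H,
         (forall e : R, 0 < e -> exists N : nat, forall m n : nat,
            (N <= m)%N -> (N <= n)%N -> hnorm (u m - u n) < e) ->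
         exists l : H, forall e : R, 0 < e -> exists N : nat, forall n : nat,
            (N <= n)%N -> hnorm (u n - l) < e)].

Definition opnorm_le (T : H -> H) (c : R) : Prop :=
  forall h : H, hnorm (T h) <= c * hnorm h.

Definition is_bounded_op (T : H -> H) : Prop :=
  (forall (a : R[i]) (x y : H), T (a *: x + y) = a *: T x + T y) /\
  exists c : R, opnorm_le T c.

Definition in_V (T : H -> H) : Prop :=
  is_bounded_op T /\ forall x y : H, ip (T x) y = ip x (T y).

Definition op_add (x y : H -> H) : H -> H := fun h => x h + y h.
Definition op_scale (t : R) (x : H -> H) : H -> H := fun h => (t%:C)%C *: x h.

Definition jprod (x y : H -> H) : H -> H :=
  fun h => (2%:R)^-1 *: (x (y h) + y (x h)).

Definition is_projection (a : H -> H) : Prop := in_V a /\ a \o a = a.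

(* the range of a has (complex) dimension r *)
Definition has_rank (r : nat) (a : H -> H) : Prop :=
  exists e : 'I_r -> H,
    (forall c : 'I_r -> R[i], \sum_(i < r) c i *: e i = 0 -> forall i, c i = 0) /\
    (forall y : H, (exists x, a x = y) <-> exists c : 'I_r -> R[i], y = \sum_(i < r) c i *: e i).

Definition in_M (r : nat) (a : H -> H) : Prop := is_projection a /\ has_rank r a.

(* Jordan automorphisms of V (maps of operators, only their restriction to V matters) *)
Definition jordan_aut (Phi : (H -> H) -> (H -> H)) : Prop :=
  [/\ (forall x, in_V x -> in_V (Phi x)),
      (forall x y, in_V x -> in_V y -> Phi x = Phi y -> x = y),
      (forall y, in_V y -> exists x, in_V x /\ Phi x = y),
      (forall x y, in_V x -> in_V y -> Phi (op_add x y) = op_add (Phi x) (Phi y)) &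
      (forall (t : R) x, in_V x -> Phi (op_scale t x) = op_scale t (Phi x)) /\
      (forall x y, in_V x -> in_V y -> Phi (jprod x y) = jprod (Phi x) (Phi y))].

Definition aut_close (Phi Psi : (H -> H) -> (H -> H)) (eps : R) : Prop :=
  forall x, in_V x -> opnorm_le x 1 -> opnorm_le (fun h => Phi x h - Psi x h) eps.

(* U is open relative to S (topology of uniform convergence on the unit ball) *)
Definition rel_open (S U : ((H -> H) -> (H -> H)) -> Prop) : Prop :=
  forall Phi, S Phi -> U Phi -> exists eps : R, 0 < eps /\
    forall Psi, S Psi -> aut_close Phi Psi eps -> U Psi.

Definition connected_set (S : ((H -> H) -> (H -> H)) -> Prop) : Prop :=
  forall U1 U2, rel_open S U1 -> rel_open S U2 ->
    (forall Phi, S Phi -> U1 Phi \/ U2 Phi) ->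
    (forall Phi, S Phi -> U1 Phi -> U2 Phi -> False) ->
    (forall Phi, S Phi -> U1 Phi) \/ (forall Phi, S Phi -> U2 Phi).

(* Aut°(V) : the connected component of the identity in Aut(V) *)
Definition in_Aut0 (Phi : (H -> H) -> (H -> H)) : Prop :=
  exists S : ((H -> H) -> (H -> H)) -> Prop,
    [/\ forall Psi, S Psi -> jordan_aut Psi, connected_set S, S id & S Phi].

(* Peirce reflection sigma_p = Id - 2 P_{1/2}(p),
   P_{1/2}(p) x = p x (1-p) + (1-p) x p *)
Definition peirce_half (p x : H -> H) : H -> H :=
  fun h => p (x (h - p h)) + (x (p h) - p (x (p h))).
Definition sigma (p : H -> H) : (H -> H) -> (H -> H) :=
  fun x h => x h - 2%:R *: peirce_half p x h.

(* S(r) : group generated by sigma_p, p in M(r); since each sigma_p is an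
   involution, its elements are the finite composites of such reflections *)
Inductive in_S (r : nat) : ((H -> H) -> (H -> H)) -> Prop :=
  | S_id : in_S r id
  | S_step : forall p g, in_M r p -> in_S r g -> in_S r (sigma p \o g).

End Defs.

(* Main.v *)
Require Import Defs.
From HB Require Import structures.
From mathcomp Require Import all_boot all_order all_algebra.
From mathcomp Require Import reals complex.
From mathcomp Require Import classical_sets boolp.
From Stdlib Require Import Classical.
From mathcomp Require Import ring.
Set Implicit Arguments. Unset Strict Implicit. Unset Printing Implicit Defensive.
Import Order.TTheory GRing.Theory Num.Theory.
Local Open Scope ring_scope.
Section Basics.
Variables (R : realType) (H : lmodType R[i]) (ip : H -> H -> R[i]).
Hypothesis hH : is_complex_hilbert ip.
Local Notation C := R[i].
Local Notation "x %:C" := (real_complex R x) : ring_scope.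

Lemma ipDZl (a : C) x y z : ip (a *: x + y) z = a * ip x z + ip y z.
Proof. by case: hH. Qed.
Lemma ipC x y : ip y x = (ip x y)^*.
Proof. by case: hH. Qed.
Lemma ip_ge0 x : 0 <= ip x x.
Proof. by case: hH. Qed.
Lemma ip_eq0 x : ip x x = 0 -> x = 0.
Proof. by case: hH => _ _ _ /(_ x). Qed.

Lemma ip0l z : ip 0 z = 0.
Proof.
have := ipDZl 1 0 0 z; rewrite scaler0 addr0 mul1r => h.
by apply: (addrI (ip 0 z)); rewrite addr0 -h.
Qed.
Lemma ipDl x y z : ip (x + y) z = ip x z + ip y z.
Proof. by have := ipDZl 1 x y z; rewrite scale1r mul1r. Qed.
Lemma ipZl a x z : ip (a *: x) z = a * ip x z.
Proof. by rewrite -(addr0 (a *: x)) ipDZl ip0l addr0. Qed.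
Lemma ipNl x z : ip (- x) z = - ip x z.
Proof. by rewrite -scaleN1r ipZl mulN1r. Qed.
Lemma ipBl x y z : ip (x - y) z = ip x z - ip y z.
Proof. by rewrite ipDl ipNl. Qed.
Lemma ip0r z : ip z 0 = 0.
Proof. by rewrite ipC ip0l conjC0. Qed.
Lemma ipDr x y z : ip z (x + y) = ip z x + ip z y.
Proof. by rewrite (ipC x z) (ipC y z) ipC ipDl rmorphD. Qed.
Lemma ipZr a x z : ip z (a *: x) = a^* * ip z x.
Proof. by rewrite (ipC x z) ipC ipZl rmorphM. Qed.
Lemma ipNr x z : ip z (- x) = - ip z x.
Proof. by rewrite (ipC x z) ipC ipNl rmorphN. Qed.
Lemma ipBr x y z : ip z (x - y) = ip z x - ip z y.
Proof. by rewrite ipDr ipNr. Qed.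
Lemma ip_suml n (c : 'I_n -> C) (f : 'I_n -> H) z :
  ip (\sum_(i < n) c i *: f i) z = \sum_(i < n) c i * ip (f i) z.
Proof.
elim/big_rec2: _ => [|i y1 y2 _ <-]; first by rewrite ip0l.
by rewrite ipDl ipZl.
Qed.

Lemma ip_real x : (ip x x)^* = ip x x.
Proof. by rewrite -ipC. Qed.

Lemma ipxx_eq0 x : (ip x x == 0) = (x == 0).
Proof.
apply/eqP/eqP => [/ip_eq0 //|->]; exact: ip0l.
Qed.

Lemma ipxx_gt0 x : x != 0 -> 0 < ip x x.
Proof. by move=> hx; rewrite lt_def ip_ge0 andbT ipxx_eq0. Qed.


Definition nn (x : H) : R := complex.Re (ip x x).

Lemma ipE x : ip x x = (nn x)%:C.
Proof.
rewrite /nn; have h := ip_ge0 x; have := ger0_Im h.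
by move: (ip x x) h => z; case: z => a b /= _ ->.
Qed.

Lemma nn_ge0 x : 0 <= nn x.
Proof. by have := ip_ge0 x; rewrite ipE ler0c. Qed.

Lemma hnorm_leP (k : R) a b : 0 <= k -> ip a a <= (k^+2)%:C * ip b b ->
  hnorm ip a <= k * hnorm ip b.
Proof.
rewrite (ipE a) (ipE b) -rmorphM lecR => hk h.
rewrite /hnorm -/(nn a) -/(nn b).
rewrite -{1}(ger0_norm hk) -sqrtr_sqr -sqrtrM ?sqr_ge0 //.
exact: ler_wsqrtr.
Qed.

Lemma hnorm_leE (k : R) a b : 0 <= k -> hnorm ip a <= k * hnorm ip b ->
  ip a a <= (k^+2)%:C * ip b b.
Proof.
rewrite (ipE a) (ipE b) -rmorphM lecR => hk.
rewrite /hnorm -/(nn a) -/(nn b) => h.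
rewrite -(sqr_sqrtr (nn_ge0 a)) -(sqr_sqrtr (nn_ge0 b)) -exprMn.
rewrite !expr2; apply: ler_pM => //; exact: sqrtr_ge0.
Qed.

Lemma hnorm_ge0 a : 0 <= hnorm ip a.
Proof. exact: sqrtr_ge0. Qed.

Definition lin (T : H -> H) := forall (a : C) x y, T (a *: x + y) = a *: T x + T y.
Definition selfadj (T : H -> H) := forall x y, ip (T x) y = ip x (T y).

Section Lin.
Variable T : H -> H.
Hypothesis hT : lin T.
Lemma lin0 : T 0 = 0.
Proof.
have := hT 1 0 0; rewrite scaler0 addr0 scale1r => h.
by apply: (addrI (T 0)); rewrite addr0 -h.
Qed.
Lemma linD x y : T (x + y) = T x + T y.
Proof. by have := hT 1 x y; rewrite !scale1r. Qed.
Lemma linZ a x : T (a *: x) = a *: T x.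
Proof. by have := hT a x 0; rewrite !addr0 lin0 addr0. Qed.
Lemma linN x : T (- x) = - T x.
Proof. by rewrite -scaleN1r linZ scaleN1r. Qed.
Lemma linB x y : T (x - y) = T x - T y.
Proof. by rewrite linD linN. Qed.
Lemma lin_sum n (c : 'I_n -> C) (f : 'I_n -> H) :
  T (\sum_(i < n) c i *: f i) = \sum_(i < n) c i *: T (f i).
Proof.
elim/big_rec2: _ => [|i y1 y2 _ <-]; first exact: lin0.
by rewrite hT.
Qed.
End Lin.

Lemma lin_comp (S T : H -> H) : lin S -> lin T -> lin (S \o T).
Proof. by move=> hS hT a x y /=; rewrite hT hS. Qed.

Lemma ip_inj x y : (forall k, ip x k = ip y k) -> x = y.
Proof.
move=> h; apply/eqP; rewrite -subr_eq0; apply/eqP; apply: ip_eq0.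
by rewrite ipBl h subrr.
Qed.


Definition proj (e : H -> H) := [/\ lin e, selfadj e & forall h, e (e h) = e h].

Lemma pyth e h : proj e -> ip h h = ip (e h) (e h) + ip (h - e h) (h - e h).
Proof.
case=> le se ee.
have a1 : ip (e h) (e h) = ip h (e h) by rewrite se ee.
have a2 : ip (e h) h = ip h (e h) by rewrite se.
rewrite !(ipBl, ipBr) a1 a2; ring.
Qed.

Lemma proj_le e h : proj e -> ip (e h) (e h) <= ip h h.
Proof. by move=> pe; rewrite [X in _ <= X](pyth h pe) lerDl ip_ge0. Qed.

Lemma proj_inV e : proj e -> in_V ip e.
Proof.
move=> pe; case: (pe) => le se ee; split => //; split => //.
exists 1 => h; apply: hnorm_leP => //.
by rewrite expr1n mul1r; exact: proj_le.
Qed.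

Lemma inV_lin x : in_V ip x -> lin x.
Proof. by case=> [[]]. Qed.
Lemma inV_sa x : in_V ip x -> selfadj x.
Proof. by case. Qed.

Lemma projection_proj e : is_projection ip e -> proj e.
Proof.
case=> hV ee; split; [exact: inV_lin | exact: inV_sa |].
by move=> h; have := congr1 (fun f => f h) ee.
Qed.

Definition Uop (e : H -> H) (c : C) (h : H) := e h + c *: (h - e h).

Section Uprops.
Variable e : H -> H.
Hypothesis pe : proj e.
Let le : lin e. Proof. by case: pe. Qed.
Let se : selfadj e. Proof. by case: pe. Qed.
Let ee : forall h, e (e h) = e h. Proof. by case: pe. Qed.

Lemma U_lin c : lin (Uop e c).
Proof.
move=> a x y; apply: ip_inj => k; rewrite /Uop !(linD le, linB le, linZ le).
rewrite !(ipDl, ipBl, ipZl, ipNl); ring.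
Qed.

Lemma U_e c h : e (Uop e c h) = e h.
Proof. by rewrite /Uop (linD le) (linZ le) (linB le) ee subrr scaler0 addr0. Qed.

Lemma U_comp c d h : Uop e c (Uop e d h) = Uop e (c * d) h.
Proof.
rewrite {1}/Uop U_e; apply: ip_inj => k; rewrite /Uop.
rewrite !(ipDl, ipBl, ipZl, ipNl); ring.
Qed.

Lemma U1 h : Uop e 1 h = h.
Proof. by rewrite /Uop scale1r addrC subrK. Qed.

Lemma U_adj c h k : ip (Uop e c h) k = ip h (Uop e c^* k).
Proof.
rewrite /Uop !(ipDl, ipBl, ipZl, ipNl, ipDr, ipBr, ipZr, ipNr) conjCK.
rewrite se; ring.
Qed.

Lemma U_iso c h : c * c^* = 1 -> ip (Uop e c h) (Uop e c h) = ip h h.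
Proof. by move=> hc; rewrite U_adj U_comp mulrC hc U1. Qed.

End Uprops.


Definition Psi (e : H -> H) (c : C) (x : H -> H) : H -> H :=
  fun h => x h + (c^* - 1) *: e (x (h - e h)) + (c - 1) *: (x (e h) - e (x (e h))).

Lemma lin_add x y : lin x -> lin y -> lin (op_add x y).
Proof.
move=> hx hy a u v; apply: ip_inj => k; rewrite /op_add hx hy.
rewrite !(ipDl, ipZl); ring.
Qed.

Lemma lin_scale t x : lin x -> lin (op_scale t x).
Proof.
move=> hx a u v; apply: ip_inj => k; rewrite /op_scale hx.
rewrite !(ipDl, ipZl); ring.
Qed.

Lemma lin_jprod x y : lin x -> lin y -> lin (jprod x y).
Proof.
move=> hx hy a u v; apply: ip_inj => k; rewrite /jprod !(hx, hy).
rewrite !(ipDl, ipZl); ring.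
Qed.

Section PsiProps.
Variable e : H -> H.
Hypothesis pe : proj e.
Let le : lin e. Proof. by case: pe. Qed.
Let se : selfadj e. Proof. by case: pe. Qed.
Let ee : forall h, e (e h) = e h. Proof. by case: pe. Qed.

Definition unit_c (c : C) := c * c^* = 1.

Lemma unit_cJ c : unit_c c -> unit_c c^*.
Proof. by rewrite /unit_c conjCK mulrC. Qed.

Lemma unit_c_neq0 c : unit_c c -> c != 0.
Proof. by rewrite /unit_c => h; apply/eqP => c0; move: h; rewrite c0 mul0r => /eqP; rewrite eq_sym oner_eq0. Qed.

Lemma unit_cV c : unit_c c -> c^* = c^-1.
Proof.
move=> h; have c0 := unit_c_neq0 h.
by apply: (mulfI c0); rewrite h mulfV.
Qed.

Lemma Psi_U c x h : lin x -> unit_c c -> Psi e c x h = Uop e c (x (Uop e c^* h)).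
Proof.
move=> hx hc; have c0 := unit_c_neq0 hc; apply: ip_inj => k.
rewrite /Psi /Uop !(linD le, linB le, linZ le, linN le, linD hx, linB hx, linZ hx, linN hx, ee).
rewrite !(ipDl, ipBl, ipZl, ipNl) (unit_cV hc).
by field.
Qed.

Lemma Psi1 x : Psi e 1 x = x.
Proof. by apply: funext => h; rewrite /Psi conjC1 subrr !scale0r !addr0. Qed.

Lemma Psim1 x : Psi e (-1) x = sigma e x.
Proof.
apply: funext => h; apply: ip_inj => k; rewrite /Psi /sigma /peirce_half.
rewrite rmorphN1 !(ipDl, ipBl, ipZl, ipNl); ring.
Qed.

Lemma UUJ c h : unit_c c -> Uop e c (Uop e c^* h) = h.
Proof. by move=> hc; rewrite U_comp // hc U1. Qed.
Lemma UJU c h : unit_c c -> Uop e c^* (Uop e c h) = h.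
Proof. by move=> hc; rewrite U_comp // mulrC hc U1. Qed.

Lemma hnormU c h : unit_c c -> hnorm ip (Uop e c h) = hnorm ip h.
Proof. by move=> hc; rewrite /hnorm U_iso. Qed.

Lemma Psi_opnorm c x k : lin x -> unit_c c -> opnorm_le ip x k ->
  opnorm_le ip (Psi e c x) k.
Proof.
move=> hx hc hk h; rewrite Psi_U // hnormU // -(hnormU h (unit_cJ hc)).
exact: hk.
Qed.

Lemma Psi_V c x : unit_c c -> in_V ip x -> in_V ip (Psi e c x).
Proof.
move=> hc [[hx [k hk]] sx]; split; first split.
- have -> : Psi e c x = Uop e c \o (x \o Uop e c^*).
    by apply: funext => h; rewrite Psi_U.
  by apply: lin_comp; [exact: U_lin | apply: lin_comp => //; exact: U_lin].
- by exists k; apply: Psi_opnorm.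
- move=> u v; rewrite !Psi_U // U_adj // sx U_adj // conjCK //.
Qed.

Lemma Psi_jordan c : unit_c c -> jordan_aut ip (Psi e c).
Proof.
move=> hc; have hc' := unit_cJ hc.
split.
- by move=> x; apply: Psi_V.
- move=> x y hx hy exy; apply: funext => h.
  have E : forall z, in_V ip z -> z h = Uop e c^* (Psi e c z (Uop e c h)).
    by move=> z hz; rewrite Psi_U ?UJU //; exact: inV_lin.
  by rewrite (E x hx) (E y hy) exy.
- move=> y hy; exists (Psi e c^* y); split; first exact: Psi_V.
  apply: funext => h; rewrite Psi_U //; last first.
    by case: (Psi_V hc' hy) => [[]].
  by rewrite Psi_U ?conjCK ?UUJ //; exact: inV_lin.
- move=> x y hx hy; apply: funext => h.
  have lx := inV_lin hx; have ly := inV_lin hy.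
  by rewrite /op_add !Psi_U ?(linD (U_lin pe c)) //; exact: lin_add.
- split.
  + move=> t x hx; apply: funext => h; have lx := inV_lin hx.
    by rewrite /op_scale !Psi_U ?(linZ (U_lin pe c)) //; exact: lin_scale.
  + move=> x y hx hy; apply: funext => h.
    have lx := inV_lin hx; have ly := inV_lin hy.
    rewrite /jprod !Psi_U ?(linZ (U_lin pe c)) ?(linD (U_lin pe c)) ?UJU //.
    exact: lin_jprod.
Qed.

End PsiProps.


Lemma Psi_diff e c d y h : Psi e c y h - Psi e d y h =
  (c^* - d^*) *: e (y (h - e h)) + (c - d) *: (y (e h) - e (y (e h))).
Proof.
apply: ip_inj => k; rewrite /Psi !(ipDl, ipBl, ipZl, ipNl); ring.
Qed.

Lemma Psi_lip e c d y h : proj e -> in_V ip y -> opnorm_le ip y 1 ->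
  ip (Psi e c y h - Psi e d y h) (Psi e c y h - Psi e d y h)
    <= ((c - d) * (c - d)^*) * ip h h.
Proof.
move=> pe hy hy1; case: (pe) => le se ee.
rewrite Psi_diff.
set w := y (h - e h); set z := y (e h).
set A := e w; set B := z - e z.
have eB : e B = 0 by rewrite /B (linB le) ee subrr.
have hAB : ip A B = 0 by rewrite /A se eB ip0r.
have hBA : ip B A = 0 by rewrite ipC hAB conjC0.
have -> : ip ((c^* - d^*) *: A + (c - d) *: B) ((c^* - d^*) *: A + (c - d) *: B)
   = ((c - d) * (c - d)^*) * (ip A A + ip B B).
  move: hAB hBA; clearbody A B => hAB hBA.
  have cj : c^* - d^* = (c - d)^* by rewrite rmorphB.
  rewrite cj !(ipDl, ipZl, ipDr, ipZr) hAB hBA !conjCK; ring.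
apply: ler_wpM2l; first exact: mul_conjC_ge0.
have y1 : forall u, ip (y u) (y u) <= ip u u.
  move=> u; have := hnorm_leE ler01 (hy1 u).
  by rewrite expr1n mul1r.
have hA : ip A A <= ip (h - e h) (h - e h).
  exact: le_trans (proj_le _ pe) (y1 _).
have hB : ip B B <= ip (e h) (e h).
  apply: le_trans (y1 (e h)); rewrite -/z (pyth z pe) lerDr; exact: ip_ge0.
by rewrite (pyth h pe) addrC; apply: lerD.
Qed.

(* a path on the unit circle from 1 to -1 *)
Definition pX (t : R) : R := ((1 - t ^+ 2) ^+ 2 - 4 * t ^+ 2) / (1 + t ^+ 2) ^+ 2.
Definition pY (t : R) : R := 4 * t * (1 - t ^+ 2) / (1 + t ^+ 2) ^+ 2.
Definition cp (t : R) : C := Complex (pX t) (pY t).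

Lemma pos1t (t : R) : 0 < 1 + t ^+ 2.
Proof. by apply: ltr_pwDl => //; exact: sqr_ge0. Qed.
Lemma neq1t (t : R) : 1 + t ^+ 2 != 0.
Proof. by rewrite gt_eqF // pos1t. Qed.

Lemma cp_unit t : unit_c (cp t).
Proof.
rewrite /unit_c /cp; have h := neq1t t.
change (@Complex R (pX t * pX t - pY t * - pY t) (pX t * - pY t + pY t * pX t) = @Complex R 1 0).
congr Complex; last by ring.
rewrite /pX /pY; field; exact: h.
Qed.

Lemma cp0 : cp 0 = 1.
Proof.
have hx : pX 0 = 1 by rewrite /pX expr0n /= subr0 mulr0 subr0 addr0 expr1n invr1 mulr1.
have hy : pY 0 = 0 by rewrite /pY mulr0 !mul0r.
by rewrite /cp hx hy.
Qed.

Lemma cp1 : cp 1 = -1.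
Proof.
have hx : pX 1 = -1.
  rewrite /pX expr1n subrr expr0n /= sub0r mulr1.
  have h2 : (1 + 1 : R) != 0 by rewrite -(natrD R 1 1) pnatr_eq0.
  by field.
have hy : pY 1 = 0 by rewrite /pY expr1n subrr mulr0 mul0r.
rewrite /cp hx hy; apply/eqP; rewrite eq_complex /= oppr0 !eqxx //.
Qed.

Lemma path_id (t s : R) : (pX t - pX s) ^+ 2 + (pY t - pY s) ^+ 2 =
  16 * (t - s) ^+ 2 * (1 + t * s) ^+ 2 / ((1 + t ^+ 2) ^+ 2 * (1 + s ^+ 2) ^+ 2).
Proof.
have ht := neq1t t; have hs := neq1t s.
rewrite /pX /pY; field; by rewrite ht hs.
Qed.

Lemma path_lip (t s : R) : (pX t - pX s) ^+ 2 + (pY t - pY s) ^+ 2 <= 16 * (t - s) ^+ 2.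
Proof.
rewrite path_id -mulrA; apply: ler_piMr; first by apply: mulr_ge0 => //; exact: sqr_ge0.
have hP : 0 < (1 + t ^+ 2) ^+ 2 * (1 + s ^+ 2) ^+ 2.
  by apply: mulr_gt0; apply: exprn_gt0; exact: pos1t.
rewrite ler_pdivrMr // mul1r -exprMn.
set Q := (1 + t ^+ 2) * (1 + s ^+ 2).
have h1 : (1 + t * s) ^+ 2 <= Q.
  rewrite /Q -subr_ge0 (_ : _ - _ = (t - s) ^+ 2); first exact: sqr_ge0.
  ring.
have hQ : 1 <= Q.
  by rewrite /Q; apply: mulr_ege1; rewrite lerDl sqr_ge0.
apply: (le_trans h1); rewrite expr2 ler_peMr //; exact: le_trans ler01 hQ.
Qed.

Lemma cp_lip (t s : R) : (cp t - cp s) * (cp t - cp s)^* <= (16 * (t - s) ^+ 2)%:C.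
Proof.
rewrite /cp.
change (@Complex R ((pX t - pX s) * (pX t - pX s) - (pY t - pY s) * - (pY t - pY s))
   ((pX t - pX s) * - (pY t - pY s) + (pY t - pY s) * (pX t - pX s))
   <= (16 * (t - s) ^+ 2)%:C).
rewrite lecE /=; apply/andP; split.
  by apply/eqP; ring.
by rewrite mulrN opprK -!expr2; exact: path_lip.
Qed.


Local Notation Aut := ((H -> H) -> (H -> H)).

Lemma aut_close_mono (Phi Psi : Aut) eps eps' : eps <= eps' ->
  aut_close ip Phi Psi eps -> aut_close ip Phi Psi eps'.
Proof.
move=> le hc x hx hx1 h; apply: le_trans (hc x hx hx1 h) _.
apply: ler_wpM2r => //; exact: hnorm_ge0.
Qed.

Lemma small_step (a b : R) : 0 < a -> 0 < b -> exists d, [/\ 0 < d, d <= a & d <= b].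
Proof.
move=> a0 b0; exists (Num.min a b); split.
- by rewrite lt_min a0 b0.
- by rewrite ge_min lexx.
- by rewrite ge_min lexx orbT.
Qed.

Lemma path_connected (F : R -> Aut) (K : R) : 0 < K ->
  (forall t s, 0 <= t <= 1 -> 0 <= s <= 1 ->
     aut_close ip (F t) (F s) (K * `|t - s|)) ->
  connected_set ip (fun Phi => exists t, 0 <= t <= 1 /\ Phi = F t).
Proof.
move=> K0 hF.
set S := (fun Phi => exists t, 0 <= t <= 1 /\ Phi = F t).
have SF : forall t, 0 <= t <= 1 -> S (F t) by move=> t ht; exists t.
have claim : forall V1 V2 : Aut -> Prop, rel_open ip S V1 -> rel_open ip S V2 ->
    (forall Phi, S Phi -> V1 Phi \/ V2 Phi) ->
    (forall Phi, S Phi -> V1 Phi -> V2 Phi -> False) ->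
    V1 (F 0) -> forall t, 0 <= t <= 1 -> V1 (F t).
  move=> V1 V2 o1 o2 cov disj V10.
  pose E : set R := fun t => 0 <= t <= 1 /\ forall s, 0 <= s <= t -> V1 (F s).
  have E0 : E 0.
    split; first by rewrite lexx ler01.
    by move=> s /andP[s0 s0']; have -> : s = 0 by apply/eqP; rewrite eq_le s0 s0'.
  have ub1 : ubound E 1 by move=> t [/andP[]].
  have hs : has_sup E by split; [exists 0 | exists 1].
  set tau := sup E.
  have tau0 : 0 <= tau by exact: sup_upper_bound.
  have tau1 : tau <= 1 by apply: ge_sup => //; exists 0.
  have T01 : 0 <= tau <= 1 by rewrite tau0 tau1.
  have St : S (F tau) by apply: SF.
  have hA : forall s, 0 <= s -> s < tau -> V1 (F s).
    move=> s s0 st; have := @sup_adherent R E (tau - s); rewrite subr_gt0 => /(_ st hs).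
    case=> t [_ Ht]; rewrite opprB addrCA subrr addr0 => lt.
    by apply: Ht; rewrite s0 ltW.
  have hB : V1 (F tau).
    case: (classic (V1 (F tau))) => // nV1.
    have V2t : V2 (F tau) by case: (cov (F tau)).
    have [eps [eps0 heps]] := o2 (F tau) St V2t.
    move: (tau0); rewrite le_eqVlt => /orP[/eqP tz|tpos].
      by exfalso; apply: nV1; rewrite -tz.
    have [d [d0 dt de]] := small_step tpos (divr_gt0 eps0 K0).
    have s0 : 0 <= tau - d by rewrite subr_ge0.
    have st : tau - d < tau by rewrite ltrBlDr ltrDl.
    have Ss : 0 <= tau - d <= 1 by rewrite s0 (le_trans (ltW st) tau1).
    exfalso; apply: (disj (F (tau - d))); first exact: SF.
      exact: hA.
    apply: heps; first exact: SF.
    apply: aut_close_mono (hF _ _ T01 Ss).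
    rewrite opprB addrCA subrr addr0 ger0_norm ?(ltW d0) //.
    by rewrite -ler_pdivlMl // mulrC.
  have tau_eq : tau = 1.
    case: (classic (tau < 1)) => [lt1|]; last first.
      by move=> h; apply/eqP; rewrite eq_le tau1 /=; rewrite leNgt; apply/negP.
    have [eps [eps0 heps]] := o1 (F tau) St hB.
    have lt1' : 0 < 1 - tau by rewrite subr_gt0.
    have [d [d0 dt de]] := small_step lt1' (divr_gt0 eps0 K0).
    have Et : E (tau + d).
      split.
        by rewrite (addr_ge0 tau0 (ltW d0)) -lerBrDl.
      move=> s /andP[s0 sle].
      case: (ltgtP s tau) => [slt|sgt|->] //.
        exact: hA.
      have Ss : 0 <= s <= 1.
        by rewrite s0 (le_trans sle) // -lerBrDl.
      apply: heps; first exact: SF.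
      apply: aut_close_mono (hF _ _ T01 Ss).
      rewrite distrC ger0_norm ?subr_ge0 ?(ltW sgt) //.
      rewrite -ler_pdivlMl // mulrC; apply: le_trans de.
      by rewrite lerBlDl.
    have := sup_upper_bound hs Et; rewrite -/tau => h.
    by exfalso; move: h; rewrite gerDl leNgt d0.
  move=> t /andP[t0 t1].
  case: (ltgtP t tau) => [tlt|tgt|->] //.
    exact: hA.
  by exfalso; move: tgt; rewrite tau_eq ltNge t1.
move=> U1 U2 o1 o2 cov disj.
have S0 : S (F 0) by apply: SF; rewrite lexx ler01.
case: (cov _ S0) => [h1|h2].
  by left => Phi [t [ht ->]]; exact: (claim U1 U2 o1 o2 cov disj h1 t ht).
right => Phi [t [ht ->]]; apply: (claim U2 U1 o2 o1 _ _ h2 t ht).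
  by move=> Phi1 SPhi; case: (cov _ SPhi); [right|left].
by move=> Phi1 SPhi a b; exact: (disj Phi1 SPhi b a).
Qed.

Lemma rel_open_sub (S1 S2 U : Aut -> Prop) : (forall Phi, S1 Phi -> S2 Phi) ->
  rel_open ip S2 U -> rel_open ip S1 U.
Proof.
move=> sub o Phi h1 hU; have [eps [eps0 he]] := o Phi (sub _ h1) hU.
exists eps; split => // Psi hPsi; apply: he; exact: sub.
Qed.

Lemma connected_union (S1 S2 : Aut -> Prop) Phi0 :
  connected_set ip S1 -> connected_set ip S2 -> S1 Phi0 -> S2 Phi0 ->
  connected_set ip (fun Phi => S1 Phi \/ S2 Phi).
Proof.
move=> c1 c2 h1 h2 U1 U2 o1 o2 cov disj.
have sub1 : forall Phi, S1 Phi -> S1 Phi \/ S2 Phi by move=> Phi; left.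
have sub2 : forall Phi, S2 Phi -> S1 Phi \/ S2 Phi by move=> Phi; right.
have k1 := c1 U1 U2 (rel_open_sub sub1 o1) (rel_open_sub sub1 o2)
  (fun Phi h => cov Phi (sub1 Phi h)) (fun Phi h => disj Phi (sub1 Phi h)).
have k2 := c2 U1 U2 (rel_open_sub sub2 o1) (rel_open_sub sub2 o2)
  (fun Phi h => cov Phi (sub2 Phi h)) (fun Phi h => disj Phi (sub2 Phi h)).
case: k1 => k1; case: k2 => k2.
- by left => Phi [/k1|/k2].
- by exfalso; apply: (disj Phi0 (sub1 _ h1)); [exact: k1 | exact: k2].
- by exfalso; apply: (disj Phi0 (sub1 _ h1)); [exact: k2 | exact: k1].
- by right => Phi [/k1|/k2].
Qed.

Lemma connected_single (Phi0 : Aut) : connected_set ip (fun Phi => Phi = Phi0).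
Proof.
move=> U1 U2 _ _ cov _.
by case: (cov Phi0 erefl) => h; [left|right] => Phi ->.
Qed.

Lemma jordan_comp (A B : Aut) : jordan_aut ip A -> jordan_aut ip B ->
  jordan_aut ip (A \o B).
Proof.
case=> A1 A2 A3 A4 [A5 A6]; case=> B1 B2 B3 B4 [B5 B6]; split.
- by move=> x hx; apply: A1; apply: B1.
- by move=> x y hx hy /= /(A2 _ _ (B1 _ hx) (B1 _ hy)) /(B2 _ _ hx hy).
- move=> y hy; have [z [hz <-]] := A3 y hy; have [x [hx <-]] := B3 z hz.
  by exists x.
- by move=> x y hx hy /=; rewrite B4 // A4 //; apply: B1.
split.
- by move=> t x hx /=; rewrite B5 // A5 //; apply: B1.
- by move=> x y hx hy /=; rewrite B6 // A6 //; apply: B1.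
Qed.

Lemma jordan_id : jordan_aut ip id.
Proof. by split => // y hy; exists y. Qed.


Lemma unit_cm1 : unit_c (-1).
Proof. by rewrite /unit_c rmorphN1 mulrNN mul1r. Qed.

Lemma sigma_Psi p : proj p -> sigma p = Psi p (-1).
Proof. by move=> pp; apply: funext => x; rewrite Psim1. Qed.

Lemma inM_proj r p : in_M ip r p -> proj p.
Proof. by case=> hp _; exact: projection_proj. Qed.


Lemma in_S_good r g : in_S ip r g -> jordan_aut ip g /\
  forall x, in_V ip x -> opnorm_le ip x 1 -> opnorm_le ip (g x) 1.
Proof.
elim=> {g} [|p g hp hg [IHj IHn]].
  by split => //; exact: jordan_id.
have pp := inM_proj hp.
rewrite sigma_Psi //; split.
  by apply: jordan_comp => //; exact: (Psi_jordan pp unit_cm1).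
move=> x hx hx1 /=; apply: (Psi_opnorm pp _ unit_cm1); last exact: IHn.
by case: IHj => [j1 _ _ _ _]; apply: inV_lin; exact: j1.
Qed.

Lemma in_S_Aut0 r g : in_S ip r g -> in_Aut0 ip g.
Proof.
elim=> {g} [|p g hp hg [S [Sj Sc Sid Sg]]].
  exists (fun Phi => Phi = id); split => //.
  - by move=> Psi0 ->; exact: jordan_id.
  - exact: connected_single.
have pp := inM_proj hp.
have [gj gn] := in_S_good hg.
pose F := fun t => Psi p (cp t) \o g.
exists (fun Phi => S Phi \/ exists t, 0 <= t <= 1 /\ Phi = F t); split.
- move=> Phi [/Sj //|[t [_ ->]]].
  by apply: jordan_comp gj; exact: (Psi_jordan pp (cp_unit t)).
- apply: (connected_union Sc _ Sg); last first.
    exists 0; split; first by rewrite lexx ler01.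
    rewrite /F cp0; have -> : Psi p 1 = id by apply: funext => x; rewrite Psi1.
    by [].
  apply: (@path_connected F 4) => // t s ht hs x hx hx1 h.
  have [gx1 _ _ _ _] := gj.
  have yV := gx1 x hx; have y1 := gn x hx hx1.
  rewrite /F /=; apply: hnorm_leP; first by apply: mulr_ge0 => //.
  apply: le_trans (Psi_lip _ _ _ pp yV y1) _.
  apply: ler_wpM2r; first exact: ip_ge0.
  apply: le_trans (cp_lip t s) _.
  by rewrite exprMn real_normK ?num_real // -natrX.
- by left.
- right; exists 1; split; first by rewrite ler01 lexx.
  by rewrite /F cp1 -sigma_Psi.
Qed.


Lemma sum_delta n (f : 'I_n -> H) i :
  \sum_(l < n) (l == i)%:R *: f l = f i.
Proof.
rewrite (bigD1 i) //= eqxx scale1r big1 ?addr0 //.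
by move=> l /negbTE ->; rewrite scale0r.
Qed.

Lemma rank_transfer r (P Q T : H -> H) :
  (forall h, P (P h) = P h) -> (forall h, Q (Q h) = Q h) -> lin T -> has_rank r P ->
  (forall x, P x = x -> T x = 0 -> x = 0) ->
  (forall x, P x = x -> Q (T x) = T x) ->
  (forall y, Q y = y -> exists x, P x = x /\ T x = y) -> has_rank r Q.
Proof.
move=> PP QQ lT [f [ind span]] ha hb hc.
have inP : forall c : 'I_r -> C, P (\sum_(i < r) c i *: f i) = \sum_(i < r) c i *: f i.
  move=> c; have [w <-] : exists w, P w = \sum_(i < r) c i *: f i.
    by apply/span; exists c.
  exact: PP.
exists (fun i => T (f i)); split.
  move=> c hc0; apply: ind; apply: ha; first exact: inP.
  by rewrite (lin_sum lT).
move=> y; split.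
  case=> w <-; have [x [Px <-]] := hc _ (QQ w).
  have [c ->] : exists c, x = \sum_(i < r) c i *: f i by apply/span; exists x.
  by exists c; rewrite (lin_sum lT).
case=> c ->; exists (T (\sum_(i < r) c i *: f i)).
by rewrite hb ?inP // (lin_sum lT).
Qed.

Lemma dep_lemma m n (x : 'I_m -> H) (w : 'I_n -> H) (d : 'I_m -> 'I_n -> C) :
  (n < m)%N -> (forall j, x j = \sum_(i < n) d j i *: w i) ->
  exists c : 'I_m -> C, (exists j, c j != 0) /\ \sum_(j < m) c j *: x j = 0.
Proof.
move=> nm hx.
pose A : 'M[C]_(m, n) := \matrix_(j, i) d j i.
pose K := kermx A.
have K0 : K != 0.
  rewrite -mxrank_eq0 mxrank_ker -lt0n subn_gt0.
  exact: leq_ltn_trans (rank_leq_col A) nm.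
move: K0; rewrite matrix_eq0 negb_forall => /existsP[j0].
rewrite negb_forall => /existsP[i0 nz].
exists (fun j => K j0 j); split; first by exists i0.
have KA : forall i, \sum_(j < m) K j0 j * d j i = 0.
  move=> i; have := congr1 (fun M : 'M[C]_(m, n) => M j0 i) (mulmx_ker A).
  rewrite /= !mxE => h; rewrite -[RHS]h; apply: eq_bigr => j _; congr (_ * _); by rewrite /A mxE.
rewrite (eq_bigr (fun j => \sum_(i < n) (K j0 j * d j i) *: w i)); last first.
  by move=> j _; rewrite hx scaler_sumr; apply: eq_bigr => i _; rewrite scalerA.
rewrite exchange_big /= big1 // => i _.
by rewrite -scaler_suml KA scale0r.
Qed.

Lemma orth_indep m (x : 'I_m -> H) :
  (forall j l, j != l -> ip (x j) (x l) = 0) -> (forall j, x j != 0) ->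
  forall c : 'I_m -> C, \sum_(j < m) c j *: x j = 0 -> forall j, c j = 0.
Proof.
move=> orth nz c hc l.
have := congr1 (fun v => ip v (x l)) hc; rewrite /= ip0l ip_suml.
rewrite (bigD1 l) //= big1 ?addr0; last first.
  by move=> j hj; rewrite orth ?mulr0.
move/eqP; rewrite mulf_eq0 ipxx_eq0 (negbTE (nz l)) orbF => /eqP //.
Qed.


Definition orthon (b : nat -> H) k :=
  forall i j, (i < k)%N -> (j < k)%N -> ip (b i) (b j) = (i == j)%:R.

Definition prb (b : nat -> H) k y := \sum_(j < k) ip y (b j) *: b j.

Lemma prb_orth b k y l : orthon b k -> (l < k)%N -> ip (y - prb b k y) (b l) = 0.
Proof.
move=> ob hl; rewrite ipBl /prb ip_suml.
rewrite (bigD1 (Ordinal hl)) //= ob // eqxx mulr1 big1 ?addr0 ?subrr //.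
move=> j hj; rewrite ob ?ltn_ord //.
suff -> : (nat_of_ord j == l) = false by rewrite mulr0.
by apply/negbTE; move: hj; apply: contra => /eqP h; apply/eqP/val_inj.
Qed.

Lemma exists_orth r P k (b : nat -> H) :
  (forall h, P (P h) = P h) -> lin P -> has_rank r P -> (k < r)%N ->
  (forall j, (j < k)%N -> P (b j) = b j) -> orthon b k ->
  exists x, [/\ P x = x, x != 0 & forall j, (j < k)%N -> ip x (b j) = 0].
Proof.
move=> PP lP [f [ind span]] kr Pb ob.
have Pf : forall i, P (f i) = f i.
  move=> i; have [w <-] : exists w, P w = f i.
    by apply/span; exists (fun l => (l == i)%:R); rewrite sum_delta.
  exact: PP.
have Ppr : forall y, P (prb b k y) = prb b k y.
  move=> y; rewrite /prb (lin_sum lP); apply: eq_bigr => j _.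
  by rewrite Pb // ltn_ord.
case: (classic (exists i, f i - prb b k (f i) != 0)) => [[i hi]|none].
  exists (f i - prb b k (f i)); split => //.
    by rewrite (linB lP) Pf Ppr.
  by move=> j hj; apply: prb_orth.
exfalso.
have hf : forall i, f i = \sum_(j < k) ip (f i) (b j) *: (fun j : 'I_k => b j) j.
  move=> i; apply/eqP; rewrite -subr_eq0; apply/negPn/negP => h.
  by apply: none; exists i.
have [c [[j cj] hc]] := dep_lemma kr hf.
by move: cj; rewrite (ind c hc j) eqxx.
Qed.

Lemma full_range r P (b : nat -> H) :
  (forall h, P (P h) = P h) -> lin P -> has_rank r P ->
  (forall j, (j < r)%N -> P (b j) = b j) -> orthon b r ->
  forall y, P y = y -> y = prb b r y.
Proof.
move=> PP lP hr Pb ob y Py.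
have hr' := hr; case: hr' => [f [ind span]].
apply/eqP; rewrite -subr_eq0; apply/negPn/negP => nz.
set y' := y - prb b r y in nz.
have Py' : P y' = y'.
  rewrite /y' (linB lP) Py /prb (lin_sum lP); congr (_ - _).
  by apply: eq_bigr => j _; rewrite Pb // ltn_ord.
have oy : forall j, (j < r)%N -> ip y' (b j) = 0 by move=> j hj; exact: prb_orth.
pose x := fun j : 'I_r.+1 => if (j < r)%N then b j else y'.
have hx : forall j, exists c : 'I_r -> C, x j = \sum_(i < r) c i *: f i.
  move=> j; apply/span; rewrite /x; case: ifP => hj.
    by exists (b j); rewrite Pb.
  by exists y'.
have [d hd] := choice hx.
have [c [[j cj] hc]] := dep_lemma (ltnSn r) hd.
move: cj; rewrite (orth_indep _ _ hc) ?eqxx //.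
- move=> j1 l1 hjl; rewrite /x; case: ifP => h1; case: ifP => h2.
  + rewrite ob //; suff -> : (nat_of_ord j1 == l1) = false by [].
    by apply/negbTE; move: hjl; apply: contra => /eqP h; apply/eqP/val_inj.
  + by rewrite ipC oy // conjC0.
  + by rewrite oy.
  + exfalso; move: hjl.
    have e1 : nat_of_ord j1 = r.
      by apply/eqP; rewrite eqn_leq -ltnS ltn_ord leqNgt h1.
    have e2 : nat_of_ord l1 = r.
      by apply/eqP; rewrite eqn_leq -ltnS ltn_ord leqNgt h2.
    by apply/negP; rewrite negbK; apply/eqP/val_inj; rewrite /= e1 e2.
- move=> j1; rewrite /x; case: ifP => h1 //.
  by rewrite -ipxx_eq0 ob // eqxx oner_eq0.
Qed.

Lemma proj_eq P Q : proj P -> proj Q -> (forall h, Q (P h) = P h) ->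
  (forall h, P (Q h) = Q h) -> P = Q.
Proof.
move=> [lP sP PP] [lQ sQ QQ] h1 h2; apply: funext => h; apply: ip_inj => k.
by rewrite -h1 sQ sP h2 -sQ.
Qed.


Lemma conjm1 : (-1 : C)^* = -1.
Proof. exact: rmorphN1. Qed.

Lemma sigma_U e P h : proj e -> lin P ->
  sigma e P h = Uop e (-1) (P (Uop e (-1) h)).
Proof.
move=> pe lP; rewrite (sigma_Psi pe) Psi_U //; first by rewrite conjm1.
exact: unit_cm1.
Qed.

Lemma sigma_M r e P : proj e -> proj P -> has_rank r P ->
  proj (sigma e P) /\ has_rank r (sigma e P).
Proof.
move=> pe pP hr; have [lP sP PP] := pP.
set s := Uop e (-1).
have ls : lin s := U_lin pe (-1).
have ss : forall h, s (s h) = h.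
  by move=> h; rewrite /s -{2}conjm1 UUJ //; exact: unit_cm1.
have sa : selfadj s by move=> h k; rewrite /s U_adj // conjm1.
have sE : forall h, sigma e P h = s (P (s h)) by move=> h; rewrite sigma_U.
have QQ : forall h, sigma e P (sigma e P h) = sigma e P h.
  by move=> h; rewrite !sE ss PP.
split.
  split => //.
  - have -> : sigma e P = s \o (P \o s) by apply: funext => h; rewrite sE.
    by apply: lin_comp => //; exact: lin_comp.
  - by move=> h k; rewrite !sE sa sP sa.
apply: (rank_transfer PP QQ ls hr).
- by move=> x Px sx0; rewrite -(ss x) sx0 (lin0 ls).
- by move=> x Px; rewrite sE ss Px.
- by move=> y Qy; exists (P (s y)); split; [rewrite PP | rewrite -sE].
Qed.


Lemma elem_move r P a b : proj P -> has_rank r P -> ip a a = 1 -> ip b b = 1 ->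
  P a = a -> P b = ip b a *: a ->
  exists e, in_M ip r e /\ forall h, sigma e P h = P h - ip h a *: a + ip h b *: b.
Proof.
move=> pP hr haa hbb Pa Pb; have [lP sP PP] := pP.
set z := ip a b; set nz := `|z|.
have nzJ : nz^* = nz by exact: conj_normC.
have nz0 : 0 <= nz by exact: normr_ge0.
have nz1 : 1 + nz != 0.
  by rewrite gt_eqF // (lt_le_trans ltr01) // lerDl.
pose mu := if z == 0 then 1 else z / nz.
have [muu muz] : mu * mu^* = 1 /\ mu^* * z = nz.
  rewrite /mu; case: (eqVneq z 0) => [z0|z0].
    by rewrite /= conjC1 mulr1 mul1r /nz z0 normr0.
  rewrite /=.
  have nzn : nz != 0 by rewrite normr_eq0.
  have cmu : (z / nz)^* = z^* / nz by rewrite fmorph_div; congr (_ / _); exact: nzJ.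
  rewrite cmu; split.
    rewrite mulrACA -normCK -/nz; field; exact: nzn.
  rewrite mulrAC -normCKC -/nz; field; exact: nzn.
have mu_unit : unit_c mu by [].
have mu0 := unit_c_neq0 mu_unit.
pose b' := mu *: b.
have b'E : b' = mu *: b by [].
clearbody b'.
pose v0 := a + b'.
have v0E : v0 = a + b' by [].
clearbody v0.
pose n : C := 2%:R * (1 + nz).
have n0 : n != 0 by rewrite mulf_neq0 // pnatr_eq0.
have nJ : n^* = n.
  by apply: geC0_conj; rewrite /n mulr_ge0 // addr_ge0.
have hab' : ip a b' = nz by rewrite b'E ipZr.
have hb'a : ip b' a = nz by rewrite ipC hab' nzJ.
have hb'b' : ip b' b' = 1 by rewrite b'E ipZl ipZr hbb mulr1.
have Pb' : P b' = nz *: a by rewrite b'E (linZ lP) Pb scalerA -ipZl -b'E hb'a.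
have hv0a : ip v0 a = 1 + nz by rewrite v0E ipDl haa hb'a.
have hav0 : ip a v0 = 1 + nz by rewrite v0E ipDr haa hab'.
have hv0v0 : ip v0 v0 = n.
  by rewrite v0E !(ipDl, ipDr) haa hab' hb'a hb'b' /n; ring.
pose G := fun h => P h - ip h a *: a.
have GE : forall h, G h = P h - ip h a *: a by [].
clearbody G.
have lG : lin G.
  move=> al x y; apply: ip_inj => k; rewrite !GE lP !(ipDl, ipBl, ipZl, ipNl); ring.
have sG : selfadj G.
  move=> h k; rewrite !GE ipBl ipZl ipBr ipZr sP -(ipC k a); ring.
have Ga : G a = 0 by rewrite GE Pa haa scale1r subrr.
have Gb' : G b' = 0 by rewrite GE Pb' hb'a subrr.
have Gv0 : G v0 = 0 by rewrite v0E (linD lG) Ga Gb' addr0.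
have GP : forall h, P (G h) = G h by move=> h; rewrite GE (linB lP) (linZ lP) PP Pa.
have GG : forall h, G (G h) = G h.
  move=> h; rewrite {1}GE GP; apply: ip_inj => k.
  rewrite !GE !(ipBl, ipZl, ipNl) (sP h a) Pa haa; ring.
have ipGa : forall h, ip (G h) a = 0 by move=> h; rewrite sG Ga ip0r.
have ipGv0 : forall h, ip (G h) v0 = 0 by move=> h; rewrite sG Gv0 ip0r.
pose e := fun h => G h + (ip h v0 / n) *: v0.
have eE : forall h, e h = G h + (ip h v0 / n) *: v0 by [].
clearbody e.
have le : lin e.
  move=> al x y; apply: ip_inj => k; rewrite !eE lG !(ipDl, ipZl, ipNl); ring.
have cn : forall w, (w / n)^* = w^* / n.
  by move=> w; rewrite fmorph_div; congr (_ / _); exact: nJ.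
have se : selfadj e.
  move=> h k; rewrite !eE !(ipDl, ipZl, ipDr, ipZr) sG cn -(ipC k v0); ring.
have Ge : forall h, G (e h) = G h.
  by move=> h; rewrite eE (linD lG) (linZ lG) Gv0 scaler0 addr0 GG.
have ipev0 : forall h, ip (e h) v0 = ip h v0.
  move=> h; rewrite eE ipDl ipGv0 add0r ipZl hv0v0; field; exact: n0.
have ee : forall h, e (e h) = e h by move=> h; rewrite {1}eE Ge ipev0 -eE.
have pe : proj e by [].
exists e; split.
  split; first by split; [exact: proj_inV | apply: funext => h; exact: ee].
  apply: (rank_transfer PP ee le hr).
  - move=> x Px ex0.
    have ixb : ip x b' = nz * ip x a by rewrite -{1}Px sP Pb' ipZr nzJ.
    have ixv : ip x v0 = (1 + nz) * ip x a by rewrite v0E ipDr ixb; ring.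
    have : ip (e x) a = 0 by rewrite ex0 ip0l.
    rewrite eE ipDl ipGa add0r ipZl hv0a ixv => /eqP.
    rewrite !mulf_eq0 invr_eq0 (negbTE nz1) (negbTE n0) /= !orbF => /eqP ia.
    have : e x = G x by rewrite eE ixv ia mulr0 mul0r scale0r addr0.
    by rewrite ex0 GE Px ia scale0r subr0.
  - by move=> x _; exact: ee.
  - move=> y ey; exists (G y + (ip y v0 / (1 + nz)) *: a); split.
      by rewrite (linD lP) (linZ lP) GP Pa.
    rewrite -[RHS]ey !eE (linD lG) (linZ lG) GG Ga scaler0 addr0.
    congr (_ + _); congr (_ *: _); rewrite ipDl ipGv0 add0r ipZl hav0.
    by field; rewrite nz1 n0.
move=> h; rewrite sigma_U //.
set s := Uop e (-1).
have ls : lin s := U_lin pe (-1).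
have sw : forall w, s w = e w - (w - e w) by move=> w; rewrite /s /Uop scaleN1r.
have sa : selfadj s by move=> u k; rewrite /s U_adj // conjm1.
have ea : e a = ((1 + nz) / n) *: v0 by rewrite eE Ga add0r hav0.
have sa_ : s a = b'.
  apply: ip_inj => k; rewrite sw ea v0E !(ipBl, ipZl, ipDl, ipNl) /n.
  by field; exact: nz1.
have sG_ : forall w, s (G w) = G w.
  move=> w; rewrite sw; have -> : e (G w) = G w by rewrite eE GG ipGv0 mul0r scale0r addr0.
  by rewrite subrr subr0.
have Gs : G (s h) = G h by rewrite sw !(linB lG) Ge subrr subr0.
have PG : forall w, P w = G w + ip w a *: a by move=> w; rewrite GE subrK.
have Psh : P (s h) = G h + ip h b' *: a by rewrite PG Gs sa sa_.
rewrite Psh (linD ls) (linZ ls) sG_ sa_.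
apply: ip_inj => k; rewrite GE b'E !(ipDl, ipBl, ipZl, ipZr, ipNl) (unit_cV mu_unit).
by field.
Qed.


Definition nrm (x : H) : H := ((Num.sqrt (nn x))^-1)%:C *: x.

Lemma nrm_unit x : x != 0 -> ip (nrm x) (nrm x) = 1.
Proof.
move=> x0; rewrite /nrm ipZl ipZr ipE.
have n0 : 0 < nn x.
  rewrite lt_def nn_ge0 andbT; apply/eqP => h; move: x0.
  by rewrite -ipxx_eq0 ipE h rmorph0 eqxx.
have kJ : ((Num.sqrt (nn x))^-1)%:C^* = ((Num.sqrt (nn x))^-1)%:C.
  by apply: geC0_conj; rewrite ler0c invr_ge0 sqrtr_ge0.
rewrite kJ -!rmorphM mulrA -expr2 exprVn sqr_sqrtr ?(ltW n0) // mulVf ?gt_eqF //.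
Qed.

Lemma chain r p q : in_M ip r p -> in_M ip r q -> forall k, (k <= r)%N ->
  exists g, in_S ip r g /\ exists b : nat -> H,
    [/\ proj (g p), has_rank r (g p), orthon b k,
        (forall j, (j < k)%N -> g p (b j) = b j) &
        (forall j, (j < k)%N -> q (b j) = b j)].
Proof.
move=> hp hq; have pq := inM_proj hq; have [lq sq qq] := pq.
have rq : has_rank r q by case: hq.
elim=> [_|k IH kr].
  exists id; split; first exact: S_id.
  exists (fun _ => 0); split.
  - exact: (inM_proj hp).
  - by case: hp.
  - by move=> i j; rewrite ltn0.
  - by move=> j; rewrite ltn0.
  - by move=> j; rewrite ltn0.
have kr' : (k < r)%N by [].
have [g [gS [b [pP rP ob Pb qb]]]] := IH (ltnW kr).
set P := g p in pP rP Pb *.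
have [lP sP PP] := pP.
have [x [qx x0 xo]] := exists_orth qq lq rq kr' qb ob.
set bb := nrm x.
have bb1 : ip bb bb = 1 by exact: nrm_unit.
have qbb : q bb = bb by rewrite /bb /nrm (linZ lq) qx.
have bbo : forall j, (j < k)%N -> ip bb (b j) = 0 by move=> j hj; rewrite /bb /nrm ipZl xo ?mulr0.
have [a [Pa a1 Pbb ao]] : exists a, [/\ P a = a, ip a a = 1, P bb = ip bb a *: a &
    forall j, (j < k)%N -> ip a (b j) = 0].
  case: (eqVneq (P bb) 0) => [Pb0|Pb0].
    have [y [Py y0 yo]] := exists_orth PP lP rP kr' Pb ob.
    exists (nrm y); split.
    - by rewrite /nrm (linZ lP) Py.
    - exact: nrm_unit.
    - have Pn : P (nrm y) = nrm y by rewrite /nrm (linZ lP) Py.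
      by rewrite Pb0 -Pn -sP Pb0 ip0l scale0r.
    - by move=> j hj; rewrite /nrm ipZl yo ?mulr0.
  exists (nrm (P bb)); split.
  - by rewrite /nrm (linZ lP) PP.
  - exact: nrm_unit.
  - have h1 := nrm_unit Pb0.
    move: h1; rewrite /nrm ipZl ipZr => h1.
    have e1 : ip bb (P bb) = ip (P bb) (P bb) by rewrite sP PP.
    rewrite /nrm ipZr e1 scalerA.
    rewrite [X in X *: _](_ : _ = 1) ?scale1r //.
    by rewrite -h1; ring.
  - by move=> j hj; rewrite /nrm ipZl sP Pb // bbo ?mulr0.
have [e [eM eE]] := elem_move pP rP a1 bb1 Pa Pbb.
exists (sigma e \o g); split; first exact: S_step.
have [pQ rQ] := sigma_M (inM_proj eM) pP rP.
exists (fun j => if (j < k)%N then b j else bb); split => //.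
- move=> i j; rewrite !ltnS => hi hj.
  case: ifP => h1; case: ifP => h2.
  + exact: ob.
  + have -> : j = k by apply/eqP; rewrite eqn_leq hj leqNgt h2.
    by rewrite ipC bbo // conjC0 (ltn_eqF h1).
  + have -> : i = k by apply/eqP; rewrite eqn_leq hi leqNgt h1.
    by rewrite bbo // (gtn_eqF h2).
  + have -> : i = k by apply/eqP; rewrite eqn_leq hi leqNgt h1.
    have -> : j = k by apply/eqP; rewrite eqn_leq hj leqNgt h2.
    by rewrite bb1 eqxx.
- move=> j hj /=; rewrite eE; case: ifP => h1.
    rewrite Pb // (ipC a (b j)) ao // (ipC bb (b j)) bbo // conjC0.
    by rewrite !scale0r subr0 addr0.
  by rewrite Pbb subrr add0r bb1 scale1r.
- by move=> j hj; case: ifP => h1; [exact: qb | exact: qbb].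
Qed.

Lemma main r :
  (forall p q : H -> H, in_M ip r p -> in_M ip r q ->
     exists Phi, in_Aut0 ip Phi /\ Phi p = q) /\
  (forall p q : H -> H, in_M ip r p -> in_M ip r q ->
     exists g, in_S ip r g /\ g p = q).
Proof.
have B : forall p q : H -> H, in_M ip r p -> in_M ip r q ->
     exists g, in_S ip r g /\ g p = q.
  move=> p q hp hq.
  have [g [gS [b [pP rP ob Pb qb]]]] := chain hp hq (leqnn r).
  exists g; split => //.
  have pq := inM_proj hq; have [lq sq qq] := pq; have rq : has_rank r q by case: hq.
  have [lP sP PP] := pP.
  apply: proj_eq => // h.
  - rewrite (full_range PP lP rP Pb ob (PP h)) /prb (lin_sum lq).
    by apply: eq_bigr => j _; rewrite qb.
  - rewrite (full_range qq lq rq qb ob (qq h)) /prb (lin_sum lP).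
    by apply: eq_bigr => j _; rewrite Pb.
split => //.
move=> p q hp hq; have [g [gS gpq]] := B p q hp hq.
by exists g; split => //; exact: in_S_Aut0 gS.
Qed.

End Basics.

Theorem proposition4p8 (R : realType) (H : lmodType R[i]) (ip : H -> H -> R[i])
  (hH : is_complex_hilbert ip) (r : nat) (hr : (0 < r)%N) :
  (forall p q : H -> H, in_M ip r p -> in_M ip r q ->
     exists Phi, in_Aut0 ip Phi /\ Phi p = q) /\
  (forall p q : H -> H, in_M ip r p -> in_M ip r q ->
     exists g, in_S ip r g /\ g p = q).
Proof. exact: (main hH r). Qed.
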